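(* $\mathcal T^+=G\gamma^+$ and $\mathcal T^-=G\gamma^-$, where $\gamma^+=\{(i\sin u,0,\cos u):0<u<\pi\}$ and $\gamma^-=\{(i\sin u,0,\cos u):-\pi<u<0\}$, i.e. $\mathcal T^\pm$ is the union of the orbits under $G$ of the points of $\gamma^\pm$.
   Context: $[z\cdot z']=z_0z'_0-z_1z'_1-z_2z'_2$ on $\mathbb C^3$, $z^2=[z\cdot z]$; $X^{(c)}=\{z\in\mathbb C^3:z^2=-1\}$, $z=x+iy$; $V^+=\{y\in\mathbb R^3:y^2>0,y_0>0\}$, $V^-=-V^+$; $\mathcal T^\pm=\{z=x+iy\in X^{(c)}:y\in V^\pm\}$; $G=SO_0(1,2)$ (connected component of the group of real linear maps preserving $[\cdot]$), acting on $X^{(c)}$ by $gz=gx+igy$. *)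

(* Defs.v *)
From HB Require Import structures.
From mathcomp Require Import all_boot all_order all_algebra.
From mathcomp Require Import all_classical all_reals all_analysis.
From mathcomp Require Import complex.
Set Implicit Arguments. Unset Strict Implicit. Unset Printing Implicit Defensive.
Import Order.TTheory GRing.Theory Num.Theory.
Import numFieldTopology.Exports numFieldNormedType.Exports.
Local Open Scope ring_scope.
Local Open Scope classical_set_scope.
Local Open Scope complex_scope.

Section Defs.
Variable R : realType.

Definition lform (K : comNzRingType) (z w : 'cV[K]_3) : K :=
  z 0 0 * w 0 0 - z 1 0 * w 1 0 - z 2 0 * w 2 0.

Definition reV (z : 'cV[R[i]]_3) : 'cV[R]_3 := map_mx (@complex.Re R) z.
Definition imV (z : 'cV[R[i]]_3) : 'cV[R]_3 := map_mx (@complex.Im R) z.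

Definition Xc : set 'cV[R[i]]_3 := [set z | lform z z = -1].

Definition Vplus : set 'cV[R]_3 := [set y | 0 < lform y y /\ 0 < y 0 0].
Definition Vminus : set 'cV[R]_3 := [set y | Vplus (- y)].

Definition Tplus : set 'cV[R[i]]_3 := [set z | Xc z /\ Vplus (imV z)].
Definition Tminus : set 'cV[R[i]]_3 := [set z | Xc z /\ Vminus (imV z)].

Definition O12 : set 'M[R]_3 :=
  [set g | forall x y : 'cV[R]_3, lform (g *m x) (g *m y) = lform x y].

(* G = SO_0(1,2): the connected component of the identity in O12
   (matrices carry their standard topology from mathcomp-analysis) *)
Definition G : set 'M[R]_3 := connected_component O12 1%:M.

Definition act (g : 'M[R]_3) (z : 'cV[R[i]]_3) : 'cV[R[i]]_3 :=
  map_mx (fun r : R => r%:C) g *m z.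

Definition gpt (u : R) : 'cV[R[i]]_3 :=
  \col_(k < 3) (if k == 0 then (0 +i* sin u)
                else if k == 1 then 0 else (cos u)%:C).

Definition gamma_plus : set 'cV[R[i]]_3 :=
  [set z | exists u, 0 < u < pi /\ z = gpt u].
Definition gamma_minus : set 'cV[R[i]]_3 :=
  [set z | exists u, - pi < u < 0 /\ z = gpt u].

Definition Gorbits (S : set 'cV[R[i]]_3) : set 'cV[R[i]]_3 :=
  [set w | exists g z, G g /\ S z /\ w = act g z].

End Defs.

(* Main.v *)
Require Import Defs.
From HB Require Import structures.
From mathcomp Require Import all_boot all_order all_algebra.
From mathcomp Require Import all_classical all_reals all_analysis.
From mathcomp Require Import complex.
From mathcomp Require Import ring lra.
Import Order.TTheory GRing.Theory Num.Theory.
Import numFieldTopology.Exports numFieldNormedType.Exports.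
Local Open Scope ring_scope.
Local Open Scope classical_set_scope.
Local Open Scope complex_scope.
Section S.
Variable R : realType.
Lemma mx_cont (T : topologicalType) (f : T -> 'M[R]_3) :
  (forall i j, continuous (fun t => f t i j)) -> continuous f.
Proof.
move=> fc t A /= [P hP sPA].
have : \forall s \near t, forall ij : 'I_3 * 'I_3, P ij.1 ij.2 (f s ij.1 ij.2).
  apply: filter_forall => -[i j] /=; exact: (fc i j t _ (hP i j)).
by apply: filterS => s Hs; apply: sPA => i j; exact: (Hs (i, j)).
Qed.

Lemma proj_cont (i j : 'I_3) : continuous (fun M : 'M[R]_3 => M i j).
Proof.
move=> M A /= hA.
exists (fun i' j' => if (i', j') == (i, j) then A else setT).
  by move=> i' j'; case: eqP => [[-> ->]|_] //; exact: filterT.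
by move=> N /= HN; have := HN i j; rewrite eqxx.
Qed.
Lemma sum3 (V : nmodType) (F : 'I_3 -> V) : \sum_(j < 3) F j = F 0 + F 1 + F 2.
Proof. rewrite !big_ord_recr big_ord0 /= GRing.add0r. congr (F _ + F _ + F _); exact: val_inj. Qed.

Definition col3 {K : nzRingType} (a b c : K) : 'cV[K]_3 :=
  \col_(k < 3) nth 0 [:: a; b; c] k.

Lemma col3E0 (K : nzRingType) (a b c : K) : col3 a b c 0 0 = a.
Proof. by rewrite mxE. Qed.
Lemma col3E1 (K : nzRingType) (a b c : K) : col3 a b c 1 0 = b.
Proof. by rewrite mxE. Qed.
Lemma col3E2 (K : nzRingType) (a b c : K) : col3 a b c 2 0 = c.
Proof. by rewrite mxE. Qed.

Lemma ord3P (i : 'I_3) : i = 0 \/ i = 1 \/ i = 2.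
Proof.
case: i => [[|[|[|n]]] Hi].
- by left; apply: val_inj.
- by right; left; apply: val_inj.
- by right; right; apply: val_inj.
- by [].
Qed.

Lemma col_eq (K : Type) (v w : 'cV[K]_3) :
  v 0 0 = w 0 0 -> v 1 0 = w 1 0 -> v 2 0 = w 2 0 -> v = w.
Proof.
move=> h0 h1 h2; apply/matrixP => i j; rewrite (ord1 j).
by case: (ord3P i) => [->|[->|->]].
Qed.

Lemma mulmx3 (K : nzRingType) (M : 'M[K]_3) (v : 'cV[K]_3) i :
  (M *m v) i 0 = M i 0 * v 0 0 + M i 1 * v 1 0 + M i 2 * v 2 0.
Proof. by rewrite mxE sum3. Qed.
Lemma O12_1 : O12 (1%:M : 'M[R]_3).
Proof. by move=> x y; rewrite !mul1mx. Qed.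

Lemma O12_mul {g h : 'M[R]_3} : O12 g -> O12 h -> O12 (g *m h).
Proof. by move=> Hg Hh x y; rewrite -!mulmxA Hg Hh. Qed.

Lemma O12_col0 {g : 'M[R]_3} : O12 g ->
  g 0 0 ^+ 2 - g 1 0 ^+ 2 - g 2 0 ^+ 2 = 1.
Proof.
move=> Hg; have := Hg (col3 1 0 0) (col3 1 0 0).
rewrite /lform !mulmx3 !col3E0 !col3E1 !col3E2 => H.
apply: (etrans _ (etrans H _)); ring.
Qed.

Lemma O12_00 {g : 'M[R]_3} : O12 g -> 1 <= g 0 0 ^+ 2.
Proof.
move=> /O12_col0 H.
have -> : g 0 0 ^+ 2 = 1 + g 1 0 ^+ 2 + g 2 0 ^+ 2 by rewrite -H; ring.
by rewrite -addrA lerDl addr_ge0 // sqr_ge0.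
Qed.

Lemma G_O12 {g : 'M[R]_3} : G g -> O12 g.
Proof. exact: connected_component_sub. Qed.

Lemma G_orth {g : 'M[R]_3} : G g -> 1 <= g 0 0.
Proof.
move=> Gg.
have cI : is_interval [set (M : 'M[R]_3) 0 0 | M in @G R].
  apply/connected_intervalP; apply: connected_continuous_connected.
    exact: component_connected.
  apply: continuous_subspaceT; exact: proj_cont.
have G1 : @G R 1%:M by apply: connected_component_refl; exact: O12_1.
have h1 : [set (M : 'M[R]_3) 0 0 | M in @G R] 1 by exists 1%:M => //; rewrite mxE.
have hg : [set (M : 'M[R]_3) 0 0 | M in @G R] (g 0 0) by exists g.
have := O12_00 (G_O12 Gg).
case: (lerP 1 (g 0 0)) => // glt1 hsq.
have gle : g 0 0 <= -1.
  nra.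
have [M GM M0] := cI _ _ hg h1 0 ltac:(apply/andP; split; lra).
have := O12_00 (G_O12 GM); rewrite M0 expr0n /=; lra.
Qed.
Notation Re := (@complex.Re R).
Notation Im := (@complex.Im R).
Lemma ReM (x y : R[i]) : Re (x * y) = Re x * Re y - Im x * Im y.
Proof. by case: x => a b; case: y => c d. Qed.
Lemma ImM (x y : R[i]) : Im (x * y) = Re x * Im y + Im x * Re y.
Proof. by case: x => a b; case: y => c d. Qed.
Lemma ReD (x y : R[i]) : Re (x + y) = Re x + Re y.
Proof. by case: x => a b; case: y => c d. Qed.
Lemma ImD (x y : R[i]) : Im (x + y) = Im x + Im y.
Proof. by case: x => a b; case: y => c d. Qed.
Lemma ReB (x y : R[i]) : Re (x - y) = Re x - Re y.
Proof. by case: x => a b; case: y => c d. Qed.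
Lemma ImB (x y : R[i]) : Im (x - y) = Im x - Im y.
Proof. by case: x => a b; case: y => c d. Qed.

Lemma lformC (z w : 'cV[R[i]]_3) : lform z w =
  (lform (reV z) (reV w) - lform (imV z) (imV w)) +i* (lform (reV z) (imV w) + lform (imV z) (reV w)).
Proof.
apply/eqP; rewrite eq_complex /= /lform /reV /imV !mxE !ReB !ImB !ReM !ImM; apply/andP; split; apply/eqP; ring.
Qed.

Lemma reV_act (g : 'M[R]_3) (w : 'cV[R[i]]_3) : reV (act g w) = g *m reV w.
Proof.
apply/matrixP => i j; rewrite (ord1 j) /reV /act mulmx3 !mxE sum3 !ReD !ReM !mxE /=; ring.
Qed.

Lemma imV_act (g : 'M[R]_3) (w : 'cV[R[i]]_3) : imV (act g w) = g *m imV w.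
Proof.
apply/matrixP => i j; rewrite (ord1 j) /imV /act mulmx3 !mxE sum3 !ImD !ImM !mxE /=; ring.
Qed.

Lemma lform_act (g : 'M[R]_3) (z w : 'cV[R[i]]_3) : O12 g ->
  lform (act g z) (act g w) = lform z w.
Proof. by move=> Hg; rewrite !lformC !reV_act !imV_act !Hg. Qed.

Lemma reV_gpt (u : R) : reV (gpt u) = col3 0 0 (cos u).
Proof. by apply/matrixP => i j; rewrite (ord1 j); case: (ord3P i) => [->|[->|->]]; rewrite !mxE. Qed.

Lemma imV_gpt (u : R) : imV (gpt u) = col3 (sin u) 0 0.
Proof. by apply/matrixP => i j; rewrite (ord1 j); case: (ord3P i) => [->|[->|->]]; rewrite !mxE. Qed.

Lemma Xc_gpt (u : R) : Xc (gpt u).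
Proof.
rewrite /Xc /= lformC reV_gpt imV_gpt /lform !col3E0 !col3E1 !col3E2.
apply/eqP; rewrite eq_complex /=; apply/andP; split; apply/eqP.
  have := cos2Dsin2 u; rewrite !expr2 => <-; ring.
ring.
Qed.

Lemma Xc_act (g : 'M[R]_3) (z : 'cV[R[i]]_3) : O12 g -> Xc z -> Xc (act g z).
Proof. by move=> Hg; rewrite /Xc /= lform_act. Qed.

Lemma lformN (y : 'cV[R]_3) : lform (- y) (- y) = lform y y.
Proof. rewrite /lform !mxE; ring. Qed.

Lemma Gorbits_plus : @Gorbits R (@gamma_plus R) `<=` @Tplus R.
Proof.
move=> _ [g [z [Gg [[u [hu ->]] ->]]]]; split.
  exact: Xc_act (G_O12 Gg) (Xc_gpt u).
rewrite imV_act imV_gpt; split.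
  rewrite (G_O12 Gg) /lform !col3E0 !col3E1 !col3E2.
  have := sin_gt0_pi hu; nra.
rewrite mulmx3 !col3E0 !col3E1 !col3E2.
have := sin_gt0_pi hu; have := G_orth Gg; nra.
Qed.

Lemma Gorbits_minus : @Gorbits R (@gamma_minus R) `<=` @Tminus R.
Proof.
move=> _ [g [z [Gg [[u [hu ->]] ->]]]]; split.
  exact: Xc_act (G_O12 Gg) (Xc_gpt u).
have hs : 0 < sin (- u) by apply: sin_gt0_pi; lra.
rewrite sinN in hs.
rewrite /Vminus /Vplus /= imV_act imV_gpt lformN; split.
  rewrite (G_O12 Gg) /lform !col3E0 !col3E1 !col3E2; nra.
rewrite mxE mulmx3 !col3E0 !col3E1 !col3E2.
have := G_orth Gg; nra.
Qed.
Lemma cD (f g : R -> R) : continuous f -> continuous g -> continuous (fun t => f t + g t).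
Proof. move=> cf cg x; exact: (continuousD (cf x) (cg x)). Qed.
Lemma cM (f g : R -> R) : continuous f -> continuous g -> continuous (fun t => f t * g t).
Proof. move=> cf cg x; exact: (continuousM (cf x) (cg x)). Qed.
Lemma cN (f : R -> R) : continuous f -> continuous (fun t => - f t).
Proof. move=> cf x; exact: (continuousN (cf x)). Qed.
Lemma cC (c : R) : continuous (fun _ : R => c).
Proof. exact: cst_continuous. Qed.
Lemma cI : continuous (fun t : R => t).
Proof. move=> x; exact: cvg_id. Qed.
Lemma cS (f : R -> R) : continuous f -> continuous (fun t => Num.sqrt (f t)).
Proof. move=> cf x; exact: (continuous_comp (cf x) (@sqrt_continuous R _)). Qed.
Ltac cont := repeat first [ apply: cD | apply: cM | apply: cN | apply: cS | apply: cC | apply: cI ].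
Definition rotM (a b : R) : 'M[R]_3 :=
  \matrix_(i < 3, j < 3) nth 0 (nth [::] [:: [:: 1; 0; 0]; [:: 0; a; - b]; [:: 0; b; a]] i) j.
Definition boostM (c w : R) : 'M[R]_3 :=
  \matrix_(i < 3, j < 3) nth 0 (nth [::] [:: [:: c; w; 0]; [:: w; c; 0]; [:: 0; 0; 1]] i) j.

Lemma rot_O12 {a b : R} : a ^+ 2 + b ^+ 2 = 1 -> O12 (rotM a b).
Proof.
move=> h x y; rewrite /lform !mulmx3 !mxE /=.
apply/eqP; rewrite -subr_eq0; apply/eqP.
transitivity ((1 - (a ^+ 2 + b ^+ 2)) * (x 1 0 * y 1 0 + x 2 0 * y 2 0)); first ring.
by rewrite h subrr mul0r.
Qed.

Lemma boost_O12 {c w : R} : c ^+ 2 - w ^+ 2 = 1 -> O12 (boostM c w).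
Proof.
move=> h x y; rewrite /lform !mulmx3 !mxE /=.
apply/eqP; rewrite -subr_eq0; apply/eqP.
transitivity ((c ^+ 2 - w ^+ 2 - 1) * (x 0 0 * y 0 0 - x 1 0 * y 1 0)); first ring.
by rewrite h subrr mul0r.
Qed.

Lemma rotM_cont (fa fb : R -> R) : continuous fa -> continuous fb ->
  forall i j, continuous (fun t => rotM (fa t) (fb t) i j).
Proof.
move=> ca cb i j; under eq_fun do rewrite mxE.
by case: (ord3P i) => [->|[->|->]]; case: (ord3P j) => [->|[->|->]] /=; cont.
Qed.

Lemma boostM_cont (fa fb : R -> R) : continuous fa -> continuous fb ->
  forall i j, continuous (fun t => boostM (fa t) (fb t) i j).
Proof.
move=> ca cb i j; under eq_fun do rewrite mxE.
by case: (ord3P i) => [->|[->|->]]; case: (ord3P j) => [->|[->|->]] /=; cont.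
Qed.

Lemma mulmx_cont (A B : R -> 'M[R]_3) :
  (forall i j, continuous (fun t => A t i j)) ->
  (forall i j, continuous (fun t => B t i j)) ->
  forall i j, continuous (fun t => (A t *m B t) i j).
Proof.
move=> cA cB i j; under eq_fun do rewrite mxE sum3.
by apply: cD; [apply: cD|]; apply: cM.
Qed.
Definition sgn (b : R) : R := if b < 0 then -1 else 1.
Definition pa (a t : R) : R := 1 - t + t * a.
Definition pb (a b t : R) : R := sgn b * Num.sqrt (1 - pa a t ^+ 2).
Definition pc (w t : R) : R := Num.sqrt (1 + (t * w) ^+ 2).

Lemma pa_cont a : continuous (pa a).
Proof. rewrite /pa; cont. Qed.
Lemma pb_cont a b : continuous (pb a b).
Proof. rewrite /pb /GRing.exp /=; apply: cM; first exact: cC. apply: cS; cont; exact: pa_cont. Qed.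
Lemma pc_cont w : continuous (pc w).
Proof. rewrite /pc /GRing.exp /=; cont. Qed.
Lemma pw_cont w : continuous (fun t : R => t * w).
Proof. cont. Qed.

Lemma rot_path {a b t : R} : a ^+ 2 + b ^+ 2 = 1 -> 0 <= t <= 1 ->
  pa a t ^+ 2 + pb a b t ^+ 2 = 1.
Proof.
move=> h /andP[t0 t1]; rewrite /pb exprMn sqr_sqrtr.
  have -> : sgn b ^+ 2 = 1 by rewrite /sgn; case: ifP => _; rewrite ?sqrrN expr1n.
  ring.
have hb2 : 0 <= b ^+ 2 by rewrite sqr_ge0.
have ha1 : a <= 1 by nra.
have ha2 : -1 <= a by nra.
have p1 : pa a t <= 1 by rewrite /pa; nra.
have p2 : -1 <= pa a t by rewrite /pa; nra.
rewrite subr_ge0; nra.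
Qed.

Lemma pa0 a : pa a 0 = 1. Proof. by rewrite /pa; ring. Qed.
Lemma pa1 a : pa a 1 = a. Proof. by rewrite /pa; ring. Qed.
Lemma pb0 a b : pb a b 0 = 0.
Proof. by rewrite /pb pa0 expr1n subrr sqrtr0 mulr0. Qed.
Lemma pb1 {a b : R} : a ^+ 2 + b ^+ 2 = 1 -> pb a b 1 = b.
Proof.
move=> h; rewrite /pb pa1.
have -> : 1 - a ^+ 2 = b ^+ 2 by rewrite -h; ring.
rewrite sqrtr_sqr /sgn; case: ltP => hb.
  by rewrite ltr0_norm // mulN1r opprK.
by rewrite ger0_norm // mul1r.
Qed.
Lemma pc0 w : pc w 0 = 1.
Proof. by rewrite /pc mul0r expr0n /= addr0 sqrtr1. Qed.
Lemma pc1 {c w : R} : 0 < c -> c ^+ 2 - w ^+ 2 = 1 -> pc w 1 = c.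
Proof.
move=> c0 h; rewrite /pc mul1r.
have -> : 1 + w ^+ 2 = c ^+ 2 by rewrite -h; ring.
by rewrite sqrtr_sqr gtr0_norm.
Qed.

Lemma rotM1 : rotM 1 0 = 1%:M.
Proof.
apply/matrixP => i j; rewrite !mxE.
by case: (ord3P i) => [->|[->|->]]; case: (ord3P j) => [->|[->|->]]; rewrite /= ?oppr0.
Qed.
Lemma boostM1 : boostM 1 0 = 1%:M.
Proof.
apply/matrixP => i j; rewrite !mxE.
by case: (ord3P i) => [->|[->|->]]; case: (ord3P j) => [->|[->|->]].
Qed.

Lemma in_G {a1 b1 c w a2 b2 : R} :
  a1 ^+ 2 + b1 ^+ 2 = 1 -> a2 ^+ 2 + b2 ^+ 2 = 1 -> 0 < c -> c ^+ 2 - w ^+ 2 = 1 ->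
  G (rotM a1 b1 *m boostM c w *m rotM a2 b2).
Proof.
move=> h1 h2 c0 hc.
pose P t := rotM (pa a1 t) (pb a1 b1 t) *m boostM (pc w t) (t * w) *m rotM (pa a2 t) (pb a2 b2 t).
have Pc : continuous P.
  apply: mx_cont; apply: mulmx_cont; first apply: mulmx_cont.
  - apply: rotM_cont; [exact: pa_cont | exact: pb_cont].
  - apply: boostM_cont; [exact: pc_cont | exact: pw_cont].
  - apply: rotM_cont; [exact: pa_cont | exact: pb_cont].
have sub : P @` `[0, 1] `<=` @O12 R.
  move=> _ [t /= ht <-]; rewrite in_itv /= in ht.
  apply: O12_mul; first apply: O12_mul.
  - exact: rot_O12 (rot_path h1 ht).
  - apply: boost_O12; rewrite /pc sqr_sqrtr; first ring.
    by rewrite addr_ge0 // sqr_ge0.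
  - exact: rot_O12 (rot_path h2 ht).
have P0 : P 0 = 1%:M.
  by rewrite /P !pa0 !pb0 pc0 mul0r rotM1 boostM1 !mul1mx.
have P1 : P 1 = rotM a1 b1 *m boostM c w *m rotM a2 b2.
  by rewrite /P !pa1 (pb1 h1) (pb1 h2) (pc1 c0 hc) mul1r.
have : P @` `[0, 1] `<=` connected_component (@O12 R) 1%:M.
  apply: connected_component_max => //.
  - exists 0; last exact: P0.
    by rewrite /= in_itv /= lexx ler01.
  apply: connected_continuous_connected; first exact: segment_connected.
  exact: continuous_subspaceT.
apply; exists 1; last exact: P1.
by rewrite /= in_itv /= lexx ler01.
Qed.
Lemma rot_inv {a b : R} : a ^+ 2 + b ^+ 2 = 1 -> rotM a b *m rotM a (- b) = 1%:M.
Proof.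
move=> h; apply/matrixP => i j; rewrite mxE sum3 !mxE.
case: (ord3P i) => [->|[->|->]]; case: (ord3P j) => [->|[->|->]] /=;
  first [ring | rewrite -[X in _ = X]h; ring].
Qed.

Lemma boost_inv {c w : R} : c ^+ 2 - w ^+ 2 = 1 -> boostM c w *m boostM c (- w) = 1%:M.
Proof.
move=> h; apply/matrixP => i j; rewrite mxE sum3 !mxE.
case: (ord3P i) => [->|[->|->]]; case: (ord3P j) => [->|[->|->]] /=;
  first [ring | rewrite -[X in _ = X]h; ring].
Qed.

Lemma cV_ext (z w : 'cV[R[i]]_3) : reV z = reV w -> imV z = imV w -> z = w.
Proof.
move=> hr hi; apply/matrixP => i j.
have := congr1 (fun M : 'M[R]_(3,1) => M i j) hr; have := congr1 (fun M : 'M[R]_(3,1) => M i j) hi.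
rewrite !mxE; case: (z i j) => a b; case: (w i j) => c d /= -> ->; done.
Qed.
Lemma mul_col3 (M : 'M[R]_3) (a b c : R) : M *m col3 a b c =
  col3 (M 0 0 * a + M 0 1 * b + M 0 2 * c) (M 1 0 * a + M 1 1 * b + M 1 2 * c)
       (M 2 0 * a + M 2 1 * b + M 2 2 * c).
Proof. by apply: col_eq; rewrite mulmx3 !col3E0 !col3E1 !col3E2. Qed.

Lemma ratio_sq (y1 y2 r : R) : r != 0 -> r * r = y1 * y1 + y2 * y2 ->
  (y1 / r) ^+ 2 + (y2 / r) ^+ 2 = 1.
Proof.
move=> rn rr; transitivity ((y1 * y1 + y2 * y2) / (r * r)); first by field.
by rewrite -rr divff // mulf_neq0.
Qed.

Lemma unit_dir {y1 y2 r : R} : 0 <= r -> r * r = y1 * y1 + y2 * y2 ->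
  let a := if r == 0 then 1 else y1 / r in
  let b := if r == 0 then 0 else y2 / r in
  a ^+ 2 + b ^+ 2 = 1 /\ a * r = y1 /\ b * r = y2.
Proof.
move=> r0 rr a b; rewrite /a /b; case: eqP => hr.
  rewrite hr mulr0 in rr *; split; first by rewrite expr1n expr0n addr0.
  by split; nra.
split; first by apply: ratio_sq => //; apply/eqP.
by split; field; apply/eqP.
Qed.

Lemma construct (s : R) (z : 'cV[R[i]]_3) (Y : 'cV[R]_3) :
  (s = 1 \/ s = -1) -> Xc z -> imV z = s *: Y -> Vplus Y ->
  exists g u, G g /\ 0 < u < pi /\ z = act g (gpt (s * u)).
Proof.
move=> hs hz hY [hQ hy0].
have hs2 : s * s = 1 by case: hs => ->; ring.
have E1 := congr1 Re hz; have E2 := congr1 Im hz.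
rewrite lformC hY /= in E1 E2.
rewrite /lform !mxE in E1 E2 hQ.
set y0 := Y 0 0 in E1 E2 hQ hy0; set y1 := Y 1 0 in E1 E2 hQ; set y2 := Y 2 0 in E1 E2 hQ.
set x0 := complex.Re (z 0 0) in E1 E2; set x1 := complex.Re (z 1 0) in E1 E2;
set x2 := complex.Re (z 2 0) in E1 E2.
set Q := y0 * y0 - y1 * y1 - y2 * y2 in hQ.
have H1 : x0 * x0 - x1 * x1 - x2 * x2 = Q - 1.
  rewrite /Q; case: hs => hs; rewrite hs in E1; lra.
have H2 : x0 * y0 - x1 * y1 - x2 * y2 = 0.
  case: hs => hs; rewrite hs in E2; lra.
clear E1 E2.
pose S := Num.sqrt Q.
have S0 : 0 < S by rewrite sqrtr_gt0.
have Sn : S != 0 by rewrite gt_eqF.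
have SS : S * S = Q by rewrite -expr2 sqr_sqrtr // ltW.
pose r := Num.sqrt (y1 * y1 + y2 * y2).
have r0 : 0 <= r by rewrite sqrtr_ge0.
have rr : r * r = y1 * y1 + y2 * y2 by rewrite -expr2 sqr_sqrtr //; nra.
have [hab1 [Ea1 Eb1]] := unit_dir (y1:=y1) (y2:=y2) r0 rr.
set a1 := (if r == 0 then 1 else y1 / r) in hab1 Ea1 Eb1.
set b1 := (if r == 0 then 0 else y2 / r) in hab1 Ea1 Eb1.
pose gm := y0 / S. pose w := r / S.
have gm0 : 0 < gm by rewrite divr_gt0.
have hgw : gm ^+ 2 - w ^+ 2 = 1.
  transitivity ((y0 * y0 - r * r) / (S * S)); first by rewrite /gm /w; field.
  rewrite rr SS; have -> : y0 * y0 - (y1 * y1 + y2 * y2) = Q by rewrite /Q; ring.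
  by rewrite divff // gt_eqF.
have Ey0 : S * gm = y0 by rewrite /gm; field.
have Ey1 : S * (a1 * w) = y1 by rewrite -Ea1 /w; field.
have Ey2 : S * (b1 * w) = y2 by rewrite -Eb1 /w; field.
pose v := boostM gm (- w) *m (rotM a1 (- b1) *m reV z).
have v0 : v 0 0 = 0.
  have : S * v 0 0 = 0.
    rewrite /v !mulmx3 !mxE /=.
    rewrite -[complex.Re (z 0 0)]/x0 -[complex.Re (z 1 0)]/x1 -[complex.Re (z 2 0)]/x2.
    transitivity ((S * gm) * x0 - (S * (a1 * w)) * x1 - (S * (b1 * w)) * x2); first ring.
    by rewrite Ey0 Ey1 Ey2 -H2; ring.
  by move/eqP; rewrite mulf_eq0 (negbTE Sn) /= => /eqP.
have hb' : gm ^+ 2 - (- w) ^+ 2 = 1 by rewrite sqrrN.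
have ha' : a1 ^+ 2 + (- b1) ^+ 2 = 1 by rewrite sqrrN.
have hvv : lform v v = Q - 1.
  rewrite /v (boost_O12 hb') (rot_O12 ha') /lform !mxE.
  exact: H1.
have hpq : v 1 0 * v 1 0 + v 2 0 * v 2 0 = 1 - Q.
  move: hvv; rewrite /lform v0; lra.
set p := v 1 0 in hpq; set q := v 2 0 in hpq.
pose c := Num.sqrt (p * p + q * q).
have c0 : 0 <= c by rewrite sqrtr_ge0.
have cc : c * c = q * q + (- p) * (- p) by rewrite -expr2 sqr_sqrtr; [ring | nra].
have [hab2 [Ea2 Eb2]] := unit_dir (y1:=q) (y2:=-p) c0 cc.
set a2 := (if c == 0 then 1 else q / c) in hab2 Ea2 Eb2.
set b2 := (if c == 0 then 0 else - p / c) in hab2 Ea2 Eb2.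
have c1 : c < 1 by nra.
have Gg := in_G (a1:=a1) (b1:=b1) (c:=gm) (w:=w) (a2:=a2) (b2:=b2) hab1 hab2 gm0 hgw.
pose u := acos c.
have cin : c \in `[-1, 1]%R by rewrite in_itv /=; apply/andP; split; lra.
have cosu : cos u = c by rewrite /u acosK.
have sinu : sin u = S.
  rewrite /u sin_acos; last by apply/andP; split; lra.
  by rewrite expr2 cc /S; congr Num.sqrt; lra.
exists (rotM a1 b1 *m boostM gm w *m rotM a2 b2), u; split; first exact: Gg.
split; first by apply/andP; split; [apply: acos_gt0 | apply: acos_ltpi]; apply/andP; split; lra.
have cs : cos (s * u) = c by case: hs => ->; rewrite ?mul1r ?mulN1r ?cosN.
have ss : sin (s * u) = s * S by case: hs => ->; rewrite ?mul1r ?mulN1r ?sinN sinu.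
apply: cV_ext.
  rewrite reV_act reV_gpt cs -!mulmxA.
  have -> : rotM a2 b2 *m col3 0 0 c = v.
    apply: col_eq.
    - rewrite v0 mulmx3 !mxE /=; ring.
    - rewrite -/p mulmx3 !mxE /=; transitivity (- (b2 * c)); first ring.
      by rewrite Eb2 opprK.
    - by rewrite -/q mulmx3 !mxE /= -Ea2; ring.
  by rewrite /v [boostM gm w *m _]mulmxA (boost_inv hgw) mul1mx mulmxA (rot_inv hab1) mul1mx.
rewrite imV_act imV_gpt ss hY -!mulmxA !mul_col3.
apply: col_eq; rewrite !mxE /= -/y0 -/y1 -/y2.
- by rewrite -Ey0; ring.
- by rewrite -Ey1; ring.
- by rewrite -Ey2; ring.
Qed.
End S.

Theorem proposition2 (R : realType) :
  @Tplus R = @Gorbits R (@gamma_plus R) /\ @Tminus R = @Gorbits R (@gamma_minus R).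
Proof.
split; apply/seteqP; split.
- move=> z [hz hy].
  have [g [u [Gg [hu ->]]]] := @construct R 1 z (imV z) (or_introl erefl) hz (esym (scale1r _)) hy.
  exists g, (gpt (1 * u)); split => //; split => //.
  by exists u; split => //; rewrite mul1r.
- exact: Gorbits_plus.
- move=> z [hz hy].
  have hY : imV z = (-1) *: (- imV z) by rewrite scaleN1r opprK.
  have [g [u [Gg [hu ->]]]] := @construct R (-1) z (- imV z) (or_intror erefl) hz hY hy.
  exists g, (gpt (-1 * u)); split => //; split => //.
  exists (-1 * u); split => //.
  rewrite mulN1r; move/andP: hu => [h1 h2]; apply/andP; split; lra.
- exact: Gorbits_minus.
Qed.
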